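(* Let $\gamma_1,\dots,\gamma_n\in\mathcal{M}_k\otimes\mathcal{M}_k$ be states with $\mathcal{R}(\gamma_i)=\gamma_i$ for $i=1,\dots,n$. Then there is no vector $v=a\otimes b+c\otimes d\in\mathbb{C}^{k^n}\otimes\mathbb{C}^{k^n}$ with $a,b,c,d\in\mathbb{C}^{k^n}$, $\dim\mathrm{span}\{a,b,c,d\}=2$, such that $\mathrm{tr}\big(S(\gamma_1^\Gamma,\dots,\gamma_n^\Gamma)vv^*\big)<0$. In particular this holds with $\gamma_1=\cdots=\gamma_n$.
   Context: $\mathcal{M}_k$ denotes complex $k\times k$ matrices; $\mathcal{M}_k\otimes\mathcal{M}_m\cong\mathcal{M}_{km}$ via the Kronecker product. A state is a positive semidefinite Hermitian matrix (not necessarily of trace one). Partial transpose: $(\sum_iA_i\otimes B_i)^\Gamma=\sum_iA_i\otimes B_i^t$. Realignment on $\mathcal{M}_k\otimes\mathcal{M}_k$: identify $\mathcal{M}_k$ with $\mathbb{C}^k\otimes\mathbb{C}^k$ via $\mathrm{vec}(vw^t)=v\otimes w$ (extended linearly), and set $\mathcal{R}(A\otimes B)=\mathrm{vec}(A)\mathrm{vec}(B)^t$, extended linearly. Shuffle: if $\gamma_i=\sum_{j=1}^{n_i}A^i_j\otimes B^i_j\in\mathcal{M}_{k}\otimes\mathcal{M}_{k}$, then $S(\gamma_1,\dots,\gamma_n)=\sum_{j_1,\dots,j_n}A^1_{j_1}\otimes\cdots\otimes A^n_{j_n}\otimes B^1_{j_1}\otimes\cdots\otimes B^n_{j_n}\in\mathcal{M}_{k^n}\otimes\mathcal{M}_{k^n}$.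 *)

(* Defs.v *)
(* Complex numbers are modelled as C := R[i] for an
   arbitrary real closed field R (R = the real numbers gives the usual C). *)
From HB Require Import structures.
From mathcomp Require Import all_boot all_order all_algebra.
From mathcomp Require Export complex.
Set Implicit Arguments. Unset Strict Implicit. Unset Printing Implicit Defensive.
Import Order.TTheory GRing.Theory Num.Theory.
Local Open Scope ring_scope.

Section QDefs.
Variable R : rcfType.
Local Notation C := R[i].

(* A matrix of
   M_k (x) M_k ~ M_{k^2} (Kronecker product) is indexed by pairs
   ('I_k * 'I_k): the entry at row (i,l), column (j,m) is the coefficient
   of E_ij (x) E_lm. *)
Definition fmx (T : finType) := T -> T -> C.
Definition fvec (T : finType) := T -> C.

Definition fmx_mul (T : finType) (A B : fmx T) : fmx T :=
  fun p q => \sum_(r : T) A p r * B r q.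
Definition fmx_trace (T : finType) (A : fmx T) : C := \sum_(p : T) A p p.
Definition outer (T : finType) (v : fvec T) : fmx T :=
  fun p q => v p * (v q)^*.

Definition hermitian (T : finType) (A : fmx T) : Prop :=
  forall p q, A q p = (A p q)^*.
Definition is_state (T : finType) (A : fmx T) : Prop :=
  hermitian A /\
  forall x : fvec T, 0 <= \sum_(p : T) \sum_(q : T) (x p)^* * A p q * x q.

Definition op2 (k : nat) := fmx ('I_k * 'I_k)%type.

(* partial transpose: (A (x) B)^Gamma = A (x) B^t *)
Definition ptrans (k : nat) (g : op2 k) : op2 k :=
  fun p q => g (p.1, q.2) (q.1, p.2).

(* realignment: R(A (x) B) = vec(A) vec(B)^t with vec(v w^t) = v (x) w *)
Definition realign (k : nat) (g : op2 k) : op2 k :=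
  fun p q => g (p.1, q.1) (p.2, q.2).

(* C^{k^n} is indexed by n-tuples of indices in 'I_k *)
Definition tidx (n k : nat) := {ffun 'I_n -> 'I_k}.

Definition shuffle (n k : nat) (gs : 'I_n -> op2 k)
  : fmx (tidx n k * tidx n k)%type :=
  fun p q => \prod_(s < n) gs s (p.1 s, p.2 s) (q.1 s, q.2 s).

Definition tens (T : finType) (a b : fvec T) : fvec (T * T)%type :=
  fun p => a p.1 * b p.2.

Definition span_dim (T : finType) (s : seq (fvec T)) : nat :=
  \dim <<[seq (finfun x : {ffun T -> C^o}) | x <- s]>>%VS.

End QDefs.

(* Main.v *)
Require Import Defs.
From HB Require Import structures.
From mathcomp Require Import all_boot all_order all_algebra.
From mathcomp Require Import complex.
From mathcomp Require Import ring lra.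
Import Order.TTheory GRing.Theory Num.Theory.
Local Open Scope ring_scope.
Section G.
Variable R : rcfType.
Local Notation C := R[i].
Variable T : finType.
Implicit Types (A : fmx R T) (x y : fvec R T).

Lemma cD (x y : C) : (x + y)^* = x^* + y^*. Proof. exact: rmorphD. Qed.
Lemma cB (x y : C) : (x - y)^* = x^* - y^*. Proof. exact: rmorphB. Qed.
Lemma cM (x y : C) : (x * y)^* = x^* * y^*. Proof. exact: rmorphM. Qed.
Lemma cN (x : C) : (- x)^* = - x^*. Proof. exact: rmorphN. Qed.
Lemma cV (x : C) : (x^-1)^* = (x^*)^-1. Proof. exact: fmorphV. Qed.
Lemma cSum (I : finType) (F : I -> C) : (\sum_i F i)^* = \sum_i (F i)^*.
Proof. exact: rmorph_sum. Qed.

Definition sf A x y : C := \sum_p \sum_q (x p)^* * A p q * y q.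

Lemma sum_if_eq (F : T -> C) i : \sum_p (if p == i then F p else 0) = F i.
Proof. by rewrite -big_mkcond big_pred1_eq. Qed.

Lemma sf_shift A x i (t : C) :
  sf A (fun p => x p + (if p == i then t else 0))
       (fun p => x p + (if p == i then t else 0)) =
  sf A x x + t * (\sum_p (x p)^* * A p i) + t^* * (\sum_q A i q * x q)
  + t^* * t * A i i.
Proof.
rewrite /sf.
have E : forall p q, (x p + (if p == i then t else 0))^* * A p q *
     (x q + (if q == i then t else 0)) =
   (x p)^* * A p q * x q + (if q == i then t * ((x p)^* * A p i) else 0)
   + (if p == i then t^* * (A i q * x q) else 0)
   + (if p == i then (if q == i then t^* * t * A i i else 0) else 0).
  move=> p q; case: eqP => [->|_]; case: eqP => [->|_];
    rewrite ?rmorph0 ?addr0 ?mulr0 ?mul0r ?rmorphD; ring.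
under eq_bigr do under eq_bigr do rewrite E.
under eq_bigr do rewrite !big_split /= sum_if_eq.
rewrite !big_split /=.
rewrite [X in _ + _ + X + _]exchange_big [X in _ + _ + _ + X]exchange_big /=.
under [X in _ + _ + X + _]eq_bigr do rewrite sum_if_eq.
under [X in _ + _ + _ + X]eq_bigr do rewrite sum_if_eq.
rewrite sum_if_eq -!mulr_sumr.
done.
Qed.

Definition dl i : fvec R T := fun p => if p == i then 1 else 0.

Lemma sum_dl_l (F : T -> C) i : \sum_r (dl i r)^* * F r = F i.
Proof.
rewrite -(sum_if_eq F i); apply: eq_bigr => r _; rewrite /dl.
by case: eqP; rewrite ?conjC1 ?conjC0 ?mul1r ?mul0r.
Qed.

Lemma sum_dl_r (F : T -> C) i : \sum_r F r * dl i r = F i.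
Proof.
rewrite -(sum_if_eq F i); apply: eq_bigr => r _; rewrite /dl.
by case: eqP; rewrite ?mulr1 ?mulr0.
Qed.

Lemma sf_dl A i j : sf A (dl i) (dl j) = A i j.
Proof.
rewrite /sf; under eq_bigr do rewrite sum_dl_r.
by rewrite (sum_dl_l (fun r => A r j)).
Qed.

Definition psd A := forall x, 0 <= sf A x x.

Lemma psd_diag A (i : T) : psd A -> 0 <= A i i.
Proof. by move=> H; rewrite -sf_dl. Qed.

Lemma herm_diag_real A (i : T) : Defs.hermitian A -> (A i i)^* = A i i.
Proof. by move=> H; exact: (esym (H i i)). Qed.

Lemma zero_row A p q : Defs.hermitian A -> psd A -> A p p = 0 -> A p q = 0.
Proof.
move=> hA pA App; apply/eqP; apply/negPn/negP => nz.
set z := A p q.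
have zr : 0 < z * z^*.
  by rewrite lt_def mul_conjC_ge0 andbT mulf_neq0 // conjC_eq0.
set l := (A q q + 1) / (z * z^*).
set t := - (l * z).
have := pA (fun r => dl q r + (if r == p then t else 0)).
rewrite sf_shift sf_dl (sum_dl_l (fun r => A r p)) (sum_dl_r (fun r => A p r)) App mulr0 addr0.
have Aqp : A q p = z^* by rewrite /z hA.
rewrite Aqp.
have lr : l^* = l.
  apply: geC0_conj; rewrite /l divr_ge0 ?mul_conjC_ge0 //.
  by rewrite addr_ge0 ?ler01 ?psd_diag.
have -> : A q q + t * z^* + t^* * z = - (A q q + 2) .
  have tc : t^* = - (l * z^*).
    by rewrite /t rmorphN rmorphM; congr (- (_ * _)); exact: lr.
  rewrite tc /t.
  have K : l * (z * z^*) = A q q + 1 by rewrite /l mulfVK // gt_eqF.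
  have E : A q q + - (l * z) * z^* + - (l * z^*) * z = A q q - 2 * (l * (z * z^*)) by ring.
  rewrite E K; ring.
rewrite oppr_ge0 => H.
have : 0 < A q q + 2 by rewrite ltr_wpDl // psd_diag.
by move=> H2; move: (le_lt_trans H H2); rewrite ltxx.
Qed.

Definition schur A i : fmx R T := fun p q => A p q - A p i * A i q / A i i.

Lemma schur_herm A i : Defs.hermitian A -> Defs.hermitian (schur A i).
Proof.
move=> hA p q; rewrite /schur cB !cM cV -!hA; ring.
Qed.

Lemma schur_psd A i : Defs.hermitian A -> psd A -> A i i != 0 -> psd (schur A i).
Proof.
move=> hA pA ai x.
set z := \sum_q A i q * x q.
have wz : \sum_p (x p)^* * A p i = z^*.
  rewrite /z cSum; apply: eq_bigr => p _; rewrite cM -hA mulrC //.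
have ar : (A i i)^* = A i i by apply: herm_diag_real.
have := pA (fun p => x p + (if p == i then - (z / A i i) else 0)).
rewrite sf_shift wz -/z cN cM cV ar.
have -> : sf (schur A i) x x = sf A x x - z^* * z / A i i.
  rewrite /sf /schur -wz /z mulr_suml mulr_suml -sumrB; apply: eq_bigr => p _.
  rewrite mulr_sumr mulr_suml -sumrB; apply: eq_bigr => q _; ring.
suff -> : sf A x x + - (z / A i i) * z^* + - (z^* / A i i) * z +
   - (z^* / A i i) * - (z / A i i) * A i i = sf A x x - z^* * z / A i i by [].
by field.
Qed.

Definition nzd A := #|[pred p | A p p != 0]|.

Lemma diag0 A : Defs.hermitian A -> psd A -> (forall p, A p p = 0) -> forall p q, A p q = 0.
Proof. by move=> hA pA H p q; apply: zero_row. Qed.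

Lemma nzd_schur A i : Defs.hermitian A -> psd A -> A i i != 0 ->
  (nzd (schur A i) < nzd A)%N.
Proof.
move=> hA pA ai; apply: proper_card; apply/properP; split.
  apply/subsetP => p; rewrite !inE; apply: contra => /eqP App.
  by rewrite /schur App zero_row // mul0r mul0r subr0.
exists i; rewrite !inE // /schur negbK mulrK ?subrr // unitfE.
Qed.

Lemma gram N A : Defs.hermitian A -> psd A -> (nzd A <= N)%N ->
  {L : 'I_N -> T -> C | forall p q, A p q = \sum_j (L j p)^* * L j q}.
Proof.
elim: N A => [|N IH] A hA pA hn.
  exists (fun _ _ => 0) => p q; rewrite big_ord0; apply: (diag0 _ hA pA) => r.
  move: hn; rewrite leqn0 => /eqP/card0_eq/(_ r); rewrite !inE.
  by move/negbFE/eqP.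
case: (pickP [pred p | A p p != 0]) => [i /= ai | none]; last first.
  exists (fun _ _ => 0) => p q; rewrite big1; last by move=> j _; rewrite mulr0.
  apply: (diag0 _ hA pA) => r.
  by move: (none r) => /= /negbFE/eqP.
have [L' HL'] := IH (schur A i) (schur_herm _ i hA) (schur_psd _ _ hA pA ai)
   (leq_trans (nzd_schur _ _ hA pA ai) hn).
set s := sqrtC (A i i).
exists (fun j p => match unlift ord0 j with Some j' => L' j' p | None => A i p / s end).
move=> p q; rewrite big_ord_recl /= unlift_none.
under eq_bigr do rewrite liftK.
rewrite -HL' /schur.
have ss : s * s = A i i by rewrite -expr2 sqrtCK.
have sc : s^* = s by apply: geC0_conj; rewrite sqrtC_ge0 psd_diag.
have s0 : s != 0 by apply: contraNneq ai => s0; rewrite -ss s0 mul0r.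
rewrite cM cV sc -hA -ss; field => //.
Qed.
End G.
Arguments sf {R T}.
Arguments psd {R T}.
Arguments nzd {R T}.
Arguments schur {R T}.
Arguments dl {R T}.
Lemma cProd (R : rcfType) (I : finType) (F : I -> R[i]) : (\prod_i F i)^* = \prod_i (F i)^*.
Proof. exact: rmorph_prod. Qed.
Section P.
Variable R : rcfType.
Local Notation C := R[i].
Variables (I U V : finType) (ev : V -> I -> U) (g : I -> fmx R U).

Definition pK : fmx R V := fun X Z => \prod_s g s (ev X s) (ev Z s).

Lemma pK_psd : (forall s, Defs.hermitian (g s) /\ psd (g s)) -> psd pK.
Proof.
move=> Hg u.
pose L s := sval (@gram R U #|U| (g s) (proj1 (Hg s)) (proj2 (Hg s)) (max_card _)).
have HL : forall s p q, g s p q = \sum_j (L s j p)^* * L s j q.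
  by move=> s; exact: (svalP (@gram R U #|U| (g s) (proj1 (Hg s)) (proj2 (Hg s)) (max_card _))).
pose w (f : {ffun I -> 'I_#|U|}) := \sum_Z (\prod_s L s (f s) (ev Z s)) * u Z.
have E : forall X Z, pK X Z = \sum_(f : {ffun I -> 'I_#|U|}) \prod_s ((L s (f s) (ev X s))^* * L s (f s) (ev Z s)).
  by move=> X Z; rewrite /pK; under eq_bigr do rewrite HL; exact: bigA_distr_bigA.
have -> : sf pK u u = \sum_f (w f)^* * w f.
  rewrite /sf; under eq_bigr do under eq_bigr do rewrite E mulr_sumr mulr_suml.
  under eq_bigr do rewrite exchange_big; rewrite exchange_big; apply: eq_bigr => f _.
  rewrite /w cSum mulr_suml; apply: eq_bigr => X _; rewrite mulr_sumr; apply: eq_bigr => Z _.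
  rewrite big_split /= cM cProd; ring.
by apply: sumr_ge0 => f _; rewrite mulrC mul_conjC_ge0.
Qed.
End P.
Arguments pK {R I U V}.
Arguments pK_psd {R I U V}.
Section M.
Variable R : rcfType.
Local Notation C := R[i].
Variables (n k : nat) (gs : 'I_n -> op2 R k).
Hypothesis Hg : forall s : 'I_n, is_state (gs s) /\
     (forall p q, realign (gs s) p q = gs s p q).
Local Notation TT := (tidx n k).

Lemma sym23 s i j l m : gs s (i, j) (l, m) = gs s (i, l) (j, m).
Proof. exact: ((proj2 (Hg s)) (i, l) (j, m)). Qed.

Lemma sym14 s i j l m : gs s (m, l) (j, i) = gs s (i, l) (j, m).
Proof.
have hA := proj1 (proj1 (Hg s)).
rewrite (hA (j, i) (m, l)).
have := proj2 (Hg s) (j, m) (i, l); rewrite /realign /= => ->.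
by rewrite (hA (i, l) (j, m)) conjCK.
Qed.

Definition Sh := shuffle (fun s => ptrans (gs s)).

Lemma ShE P r : Sh P r = \prod_s gs s (P.1 s, r.2 s) (r.1 s, P.2 s).
Proof. by []. Qed.

Definition Hf (V W : TT -> TT -> C) :=
  \sum_P \sum_r Sh P r * (W r.1 r.2 * (V P.1 P.2)^*).

Lemma swap_inj (A : finType) : injective (fun P : A * A => (P.2, P.1)).
Proof. by move=> [x y] [x' y'] [-> ->]. Qed.

Lemma HfTl V W : Hf (fun x y => V y x) W = Hf V W.
Proof.
rewrite /Hf (reindex_inj (@swap_inj TT)) /=; apply: eq_bigr => P _.
apply: eq_bigr => r _; congr (_ * _); rewrite !ShE; apply: eq_bigr => s _.
by rewrite sym14.
Qed.

Lemma HfTr V W : Hf V (fun x y => W y x) = Hf V W.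
Proof.
rewrite /Hf; apply: eq_bigr => P _.
rewrite (reindex_inj (@swap_inj TT)) /=; apply: eq_bigr => r _.
congr (_ * _); rewrite !ShE; apply: eq_bigr => s _.
by rewrite sym23.
Qed.

Lemma HfDl V1 V2 W : Hf (fun x y => V1 x y + V2 x y) W = Hf V1 W + Hf V2 W.
Proof.
rewrite /Hf -big_split; apply: eq_bigr => P _; rewrite -big_split; apply: eq_bigr => r _ /=.
rewrite cD /=; ring.
Qed.

Lemma HfDr V W1 W2 : Hf V (fun x y => W1 x y + W2 x y) = Hf V W1 + Hf V W2.
Proof.
rewrite /Hf -big_split; apply: eq_bigr => P _; rewrite -big_split; apply: eq_bigr => r _ /=.
ring.
Qed.

Lemma Hf_ext V1 V2 : (forall x y, V1 x y = V2 x y) -> Hf V1 V1 = Hf V2 V2.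
Proof.
move=> E; rewrite /Hf; apply: eq_bigr => P _; apply: eq_bigr => r _.
by rewrite !E.
Qed.

Lemma Hf4 V : Hf (fun x y => V x y + V y x) (fun x y => V x y + V y x) = 4%:R * Hf V V.
Proof.
set S := (fun x y => V x y + V y x).
have E1 : Hf S S = Hf V S + Hf (fun x y => V y x) S by exact: HfDl.
have E2 : Hf V S = Hf V V + Hf V (fun x y => V y x) by exact: HfDr.
rewrite E1 (HfTl V S) E2 (HfTr V V); ring.
Qed.

Definition phi (Q : (TT * TT) * (TT * TT)) : (TT * TT) * (TT * TT) :=
  ((Q.1.1, Q.2.2), (Q.2.1, Q.1.2)).

Lemma phi_inj : injective phi.
Proof. by move=> [[a b] [c d]] [[a' b'] [c' d']] [-> -> -> ->]. Qed.

Lemma Hf_rank1 (y w : fvec R TT) :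
  0 <= Hf (fun x z => y x * w z) (fun x z => y x * w z).
Proof.
have Hpsd : forall s, Defs.hermitian (gs s) /\ psd (gs s) by move=> s; exact: (proj1 (Hg s)).
have := pK_psd (fun (X : TT * TT) s => (X.1 s, X.2 s)) gs Hpsd (fun X => y X.1 * (w X.2)^*).
suff -> : Hf (fun x z => y x * w z) (fun x z => y x * w z) =
   sf (pK (fun (X : TT * TT) s => (X.1 s, X.2 s)) gs) (fun X => y X.1 * (w X.2)^*)
      (fun X => y X.1 * (w X.2)^*) by [].
rewrite /Hf /sf !pair_bigA (reindex_inj phi_inj) /=; apply: eq_bigr => Q _.
rewrite ShE /pK /= !cM conjCK; ring.
Qed.

End M.
Section SP.
Variable R : rcfType.
Local Notation C := R[i].
Variable T : finType.

Lemma span2_basis (U : {vspace {ffun T -> C^o}}) : \dim U = 2%N ->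
  exists e f : {ffun T -> C^o}, forall v, v \in U -> exists al be : C,
    forall p, v p = al * e p + be * f p.
Proof.
move=> hd.
have H := fun v (hv : v \in U) => coord_vbasis hv.
move: (vbasis U) H.
move: (\dim U) hd => D hD; subst D => X H.
exists X`_0, X`_1 => v /H ->; exists (coord X ord0 v), (coord X (lift ord0 ord0) v) => p.
rewrite big_ord_recl big_ord_recl big_ord0 addr0 !ffunE /=.
done.
Qed.
End SP.
Lemma quad_factor (R : rcfType) (m11 B m22 : R[i]) :
  exists y1 y2 w1 w2 : R[i], [/\ y1 * w1 = m11, y1 * w2 + y2 * w1 = B & y2 * w2 = m22].
Proof.
have [->|m0] := eqVneq m11 0.
  by exists 0, 1, B, m22; split; ring.
set sq := sqrtC (B ^+ 2 - 4%:R * m11 * m22).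
have hsq : sq ^+ 2 = B ^+ 2 - 4%:R * m11 * m22 by rewrite sqrtCK.
have h2 : (2%:R : R[i]) != 0 by rewrite pnatr_eq0.
exists 1, (- ((- B + sq) / (2%:R * m11))), m11, (- (m11 * ((- B - sq) / (2%:R * m11)))).
split.
- by rewrite mul1r.
- by field.
- have E : (- B + sq) * (- B - sq) = B ^+ 2 - sq ^+ 2 by ring.
  have -> : - ((- B + sq) / (2%:R * m11)) * - (m11 * ((- B - sq) / (2%:R * m11)))
     = ((- B + sq) * (- B - sq)) / (4%:R * m11) by field.
  rewrite E hsq; field. all: try done.
Qed.
Arguments Hf {R n k}.
Arguments Hf4 {R n k gs}.
Arguments Hf_rank1 {R n k gs}.
Arguments Hf_ext {R n k}.
Arguments span2_basis {R T}.

Theorem mainTheorem19 (R : rcfType) (n k : nat) (gs : 'I_n -> op2 R k) :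
  (forall s : 'I_n, is_state (gs s) /\
     (forall p q, realign (gs s) p q = gs s p q)) ->
  ~ (exists a b c d : fvec R (tidx n k),
       span_dim [:: a; b; c; d] = 2%N /\
       fmx_trace (fmx_mul (shuffle (fun s => ptrans (gs s)))
                          (outer (fun p => tens a b p + tens c d p))) < 0).
Proof.
move=> Hg [a [b [c [d [Hd Htr]]]]].
have [e [f Hef]] := span2_basis _ Hd.
set l := [seq (finfun x : {ffun tidx n k -> (R[i])^o}) | x <- [:: a; b; c; d]].
have ex : forall x, (finfun x : {ffun tidx n k -> (R[i])^o}) \in l ->
   exists x1 x2, forall p, x p = x1 * e p + x2 * f p.
  move=> x /memv_span /Hef [x1 [x2 Hx]]; exists x1, x2 => p.
  by rewrite -Hx ffunE.
have [a1 [a2 Ha]] := ex a ltac:(by rewrite /l /= !inE eqxx).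
have [b1 [b2 Hb]] := ex b ltac:(by rewrite /l /= !inE eqxx ?orbT).
have [c1 [c2 Hc]] := ex c ltac:(by rewrite /l /= !inE eqxx ?orbT).
have [d1 [d2 Hd']] := ex d ltac:(by rewrite /l /= !inE eqxx ?orbT).
have [y1 [y2 [w1 [w2 [E1 E2 E3]]]]] := @quad_factor R (a1 * b1 + c1 * d1)
   (a1 * b2 + a2 * b1 + c1 * d2 + c2 * d1) (a2 * b2 + c2 * d2).
set V := fun x z => a x * b z + c x * d z.
set Y := fun x => y1 * e x + y2 * f x.
set W := fun x => w1 * e x + w2 * f x.
have Etr : fmx_trace (fmx_mul (shuffle (fun s => ptrans (gs s)))
                          (outer (fun p => tens a b p + tens c d p))) = Hf gs V V by [].
have key : Hf gs V V = Hf gs (fun x z => Y x * W z) (fun x z => Y x * W z).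
  apply: (@mulfI _ (4%:R : R[i])); first by rewrite pnatr_eq0.
  rewrite -(Hf4 Hg V) -(Hf4 Hg (fun x z => Y x * W z)).
  apply: Hf_ext => x z.
  rewrite /V /Y /W !Ha !Hb !Hc !Hd'.
  transitivity (2%:R * (a1 * b1 + c1 * d1) * (e x * e z) +
     (a1 * b2 + a2 * b1 + c1 * d2 + c2 * d1) * (e x * f z + f x * e z) +
     2%:R * (a2 * b2 + c2 * d2) * (f x * f z)); first by ring.
  rewrite -E1 -E2 -E3; ring.
have := Hf_rank1 Hg Y W; rewrite -key -Etr => H0.
by move: (le_lt_trans H0 Htr); rewrite ltxx.
Qed.
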